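(* Assume the setting and assumptions (A1)–(A5) described in the context, and assume additionally that the push-forward measures $\iota_n(M_n)$ converge weakly to a probability measure $P$ on $\bar L$. Then the operator $A:\mathcal F\to\mathcal F$ is symmetric with respect to the inner product $(f,g)=\int_{\bar L}fg\,dP$, i.e. $\int (Af)g\,dP=\int f(Ag)\,dP$ for all $f,g\in\mathcal F$.
   Context: $L=\bigsqcup_{n\ge0}L_n$ is a graded set with $L_0$ a singleton and each $L_n$ finite; $p^\downarrow:L\times L\to[0,\infty)$ vanishes unless $|\lambda|=|\mu|+1$ and $\sum_{\mu\in L_{|\lambda|-1}}p^\downarrow(\lambda,\mu)=1$ for $|\lambda|\ge1$. $\{M_n\}$ is a coherent system (probability measures on $L_n$ with $\sum_{\lambda\in L_n}M_n(\lambda)p^\downarrow(\lambda,\mu)=M_{n-1}(\mu)$) with $M_n(\lambda)>0$ everywhere; $p^\uparrow(\lambda,\nu)=\frac{M_{n+1}(\nu)}{M_n(\lambda)}p^\downarrow(\nu,\lambda)$; $(T_ng)(\lambda)=\sum_{\nu\in L_{n+1}}p^\uparrow(\lambda,\nu)\sum_{\tilde\lambda\in L_n}p^\downarrow(\nu,\tilde\lambda)g(\tilde\lambda)$ on real functions on $L_n$ (norm $\|g\|_n=\sup|g|$). $\bar L$ is a topological space, $\iota_n:L_n\to\bar L$ injective, $\pi_n:C(\bar L)\to C(L_n)$, $(\pi_nf)(\lambda)=f(\iota_n(\lambda))$, $C(\bar L)$ with sup norm. Assumptions: (A1) $\bar L$ compact metrizable separable; (A2) every nonempty open set meets $\iota_n(L_n)$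 for all large $n$; (A3) there is a dense subspace $\mathcal F\subset C(\bar L)$ with an exhaustive ascending sequence of finite-dimensional subspaces $\mathcal F^m$ such that for each $m$ and all large $n$, $\pi_n$ is injective on $\mathcal F^m$ and $\pi_n(\mathcal F^m)$ is $T_n$-invariant; (A4) there are $\varepsilon_n>0$, $\varepsilon_n\to0$, such that for $f\in\mathcal F^m$ the elements $g_n\in\mathcal F^m$ with $\pi_n(g_n)=\varepsilon_n^{-1}(T_n-\mathbf 1)\pi_n f$ converge in $\mathcal F^m$ to a limit $Af$, defining $A:\mathcal F\to\mathcal F$; (A5) $1\in\mathcal F$. *)

(* Defs.v *)
From HB Require Import structures.
From mathcomp Require Import all_boot all_order all_algebra.
From mathcomp Require Import all_classical all_reals all_analysis.
Import Order.TTheory GRing.Theory Num.Theory.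
Import numFieldNormedType.Exports.
Local Open Scope classical_set_scope.
Local Open Scope ring_scope.

(* The graded set L = ⊔_n L_n is given as a family of finite types L n.
   pd n nu lam = p^↓(nu, lam) for nu ∈ L_{n+1}, lam ∈ L_n (p^↓ vanishes
   off consecutive levels, so only these values are relevant). *)

Definition p_up {R : realType} (L : nat -> finType)
  (pd : forall n, L n.+1 -> L n -> R) (M : forall n, L n -> R)
  (n : nat) (lam : L n) (nu : L n.+1) : R :=
  M n.+1 nu / M n lam * pd n nu lam.

Definition T_op {R : realType} (L : nat -> finType)
  (pd : forall n, L n.+1 -> L n -> R) (M : forall n, L n -> R)
  (n : nat) (g : L n -> R) : L n -> R :=
  fun lam => \sum_(nu : L n.+1)
     @p_up R L pd M n lam nu * \sum_(lam' : L n) pd n nu lam' * g lam'.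

Definition pi_n {R : realType} {T : Type} (L : nat -> finType)
  (iota : forall n, L n -> T) (n : nat) (f : T -> R) : L n -> R :=
  fun lam => f (iota n lam).

Definition span_of {R : realType} {T : Type} (k : nat) (b : 'I_k -> T -> R)
  : set (T -> R) :=
  [set f | exists c : 'I_k -> R, f = fun x => \sum_(i < k) c i * b i x].

Definition fin_dim_subspace {R : realType} {T : Type} (V : set (T -> R)) :=
  exists (k : nat) (b : 'I_k -> T -> R), V = span_of k b.

(* Main.v *)
Require Import Defs.
From HB Require Import structures.
From mathcomp Require Import all_boot all_order all_algebra.
From mathcomp Require Import all_classical all_reals all_analysis.
From mathcomp Require Import ring lra.
Import Order.TTheory GRing.Theory Num.Theory.
Import numFieldNormedType.Exports.
Local Open Scope classical_set_scope.
Local Open Scope ring_scope.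

Lemma fd_lin (R : realType) (T : Type) (V : set (T -> R)) :
  fin_dim_subspace V -> forall f g a b, V f -> V g ->
  V (fun x => a * f x + b * g x).
Proof.
move=> [k [bs ->]] f g a b [c ->] [d ->].
exists (fun i => a * c i + b * d i); apply: funext => x.
rewrite 2!mulr_sumr -big_split /=; apply: eq_bigr => i _.
by rewrite mulrDl !mulrA.
Qed.

Lemma T_sym_aux (R : realType) (L : nat -> finType)
  (pd : forall n, L n.+1 -> L n -> R) (M : forall n, L n -> R)
  (M_pos : forall n lam, 0 < M n lam) n (u v : L n -> R) :
  \sum_lam M n lam * T_op L pd M n u lam * v lam =
  \sum_(nu : L n.+1) M n.+1 nu * (\sum_lam pd n nu lam * u lam)
                               * (\sum_lam pd n nu lam * v lam).
Proof.
rewrite /T_op /p_up.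
under eq_bigr => lam _ do rewrite mulr_sumr mulr_suml.
rewrite exchange_big /=; apply: eq_bigr => nu _.
rewrite [X in _ = X]mulr_sumr; apply: eq_bigr => lam _.
have Mp := M_pos n lam.
field; exact: lt0r_neq0.
Qed.

Lemma T_sym (R : realType) (L : nat -> finType)
  (pd : forall n, L n.+1 -> L n -> R) (M : forall n, L n -> R)
  (M_pos : forall n lam, 0 < M n lam) n (u v : L n -> R) :
  \sum_lam M n lam * T_op L pd M n u lam * v lam =
  \sum_lam M n lam * u lam * T_op L pd M n v lam.
Proof.
rewrite T_sym_aux //.
have -> : \sum_lam M n lam * u lam * T_op L pd M n v lam =
   \sum_lam M n lam * T_op L pd M n v lam * u lam.
  by apply: eq_bigr => lam _; rewrite -!mulrA [u lam * _]mulrC.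
rewrite T_sym_aux //; apply: eq_bigr => nu _; by rewrite -!mulrA [X in _ * X]mulrC.
Qed.

Lemma bnd_cont (R : realType) (T : topologicalType) (h : T -> R) :
  compact [set: T] -> continuous h -> exists2 B : R, 0 < B & forall x, `|h x| <= B.
Proof.
move=> cT ch.
have /compact_bounded[M [_ HM]] : compact [set h x | x in [set: T]].
  apply: continuous_compact => //; exact: continuous_subspaceT.
exists (Num.max (M + 1) 1); first by rewrite lt_max ltr01 orbT.
move=> x; apply: (HM (Num.max (M+1) 1)); last by exists x.
by rewrite lt_max ltrDl ltr01.
Qed.

Lemma sum_bnd (R : realType) (I : finType) (w u v : I -> R) (e B : R) :
  (forall i, 0 <= w i) -> \sum_i w i = 1 ->
  (forall i, `|u i| <= e) -> (forall i, `|v i| <= B) ->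
  `|\sum_i w i * (u i * v i)| <= e * B.
Proof.
move=> w0 w1 ue vB.
apply: (le_trans (ler_norm_sum _ _ _)).
apply: (@le_trans _ _ (\sum_i w i * (e * B))).
  apply: ler_sum => i _; rewrite !normrM ger0_norm //.
  by apply: ler_wpM2l => //; apply: ler_pM.
by rewrite -mulr_suml w1 mul1r.
Qed.

Theorem proposition1p7
  (R : realType) (L : nat -> finType)
  (hL0 : #|L 0%N| = 1%N)
  (pd : forall n, L n.+1 -> L n -> R)
  (pd_ge0 : forall n nu lam, 0 <= pd n nu lam)
  (pd_sum1 : forall n (nu : L n.+1), \sum_(lam : L n) pd n nu lam = 1)
  (M : forall n, L n -> R)
  (M_ge0 : forall n lam, 0 <= M n lam)
  (M_sum1 : forall n, \sum_(lam : L n) M n lam = 1)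
  (M_coh : forall n (mu : L n),
      \sum_(lam : L n.+1) M n.+1 lam * pd n lam mu = M n mu)
  (M_pos : forall n lam, 0 < M n lam)
  (* (A1): \bar L compact metrizable (hence separable) *)
  (Lb : pseudoPMetricType R)
  (Lb_hausdorff : hausdorff_space Lb)
  (Lb_compact : compact [set: Lb])
  (iota : forall n, L n -> Lb)
  (iota_inj : forall n, injective (iota n))
  (* (A2) *)
  (A2 : forall U : set Lb, open U -> U !=set0 ->
      exists N, forall n, (N <= n)%N -> exists lam, U (iota n lam))
  (* (A3) *)
  (F : set (Lb -> R)) (Fm : nat -> set (Lb -> R))
  (F_cont : forall f, F f -> continuous f)
  (F_dense : forall f : Lb -> R, continuous f -> forall e : R, 0 < e ->
      exists2 g, F g & forall x, `|f x - g x| < e)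
  (Fm_fd : forall m, fin_dim_subspace (Fm m))
  (Fm_incr : forall m, Fm m `<=` Fm m.+1)
  (F_union : F = \bigcup_m Fm m)
  (A3 : forall m, exists N, forall n, (N <= n)%N ->
      {in Fm m &, injective (@pi_n R Lb L iota n)} /\
      (forall f, Fm m f -> exists2 g, Fm m g &
          @pi_n R Lb L iota n g = @T_op R L pd M n (@pi_n R Lb L iota n f)))
  (* (A4) *)
  (eps : nat -> R) (eps_pos : forall n, 0 < eps n)
  (eps_cvg : eps @ \oo --> 0)
  (A : (Lb -> R) -> (Lb -> R))
  (A_Fm : forall m f, Fm m f -> Fm m (A f))
  (A4 : forall m f, Fm m f -> forall g : nat -> Lb -> R,
      (exists N, forall n, (N <= n)%N -> Fm m (g n) /\
         @pi_n R Lb L iota n (g n) =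
           (fun lam => (eps n)^-1 *
              (@T_op R L pd M n (@pi_n R Lb L iota n f) lam - @pi_n R Lb L iota n f lam))) ->
      forall e : R, 0 < e -> exists N, forall n, (N <= n)%N ->
         forall x, `|g n x - A f x| < e)
  (* (A5) *)
  (A5 : F (fun _ => 1))
  (* P : Borel probability measure on \bar L; weak convergence iota_n(M_n) => P *)
  (P : probability (g_sigma_algebraType (@open Lb)) R)
  (weak : forall f : Lb -> R, continuous f ->
      (fun n => (\sum_(lam : L n) M n lam * f (iota n lam))%:E) @ \oo -->
        (\int[P]_x (f x)%:E)%E)
  : forall f g, F f -> F g ->
      (\int[P]_x (A f x * g x)%:E = \int[P]_x (f x * A g x)%:E)%E.
Proof.
move=> f h Ff Fh.
have Fmle : forall i j, (i <= j)%N -> Fm i `<=` Fm j.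
  move=> i j; elim: j => [|j IH]; first by rewrite leqn0 => /eqP ->.
  rewrite leq_eqVlt => /orP[/eqP -> //|]; rewrite ltnS => /IH H x Hx.
  exact/Fm_incr/H.
have FFm : forall m x, Fm m x -> F x by move=> m x Hx; rewrite F_union; exists m.
have := Ff; rewrite F_union => -[i _ Fif].
have := Fh; rewrite F_union => -[j _ Fjh].
set m := maxn i j.
have Fmf : Fm m f by apply: (Fmle i); rewrite ?leq_maxl.
have Fmh : Fm m h by apply: (Fmle j); rewrite ?leq_maxr.
have [N HN] := A3 m.
have mkG : forall u, Fm m u -> exists G : nat -> Lb -> R, forall n, (N <= n)%N ->
    Fm m (G n) /\ pi_n L iota n (G n) =
      (fun lam => (eps n)^-1 * (T_op L pd M n (pi_n L iota n u) lam - pi_n L iota n u lam)).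
  move=> u Fu.
  suff: forall n, exists G : Lb -> R, (N <= n)%N -> Fm m G /\ pi_n L iota n G =
      (fun lam => (eps n)^-1 * (T_op L pd M n (pi_n L iota n u) lam - pi_n L iota n u lam)).
    by move=> /choice[G HG]; exists G.
  move=> n; case: (leqP N n) => Nn; last by exists (fun _ => 0).
  have [_ /(_ u Fu)[g Fg Hg]] := HN n Nn.
  exists (fun x => (eps n)^-1 * g x + (- (eps n)^-1) * u x) => _.
  split; first exact: fd_lin.
  apply: funext => lam; rewrite /pi_n /= -/(pi_n L iota n u).
  have := congr1 (fun q => q lam) Hg; rewrite /pi_n /= => ->.
  by rewrite -/(pi_n L iota n u); ring.
have [Gf HGf] := mkG f Fmf.
have [Gh HGh] := mkG h Fmh.
have cvGf := A4 m f Fmf Gf (ex_intro _ N HGf).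
have cvGh := A4 m h Fmh Gh (ex_intro _ N HGh).
have cf := F_cont f Ff.
have ch := F_cont h Fh.
have cAf := F_cont (A f) (FFm m _ (A_Fm m f Fmf)).
have cAh := F_cont (A h) (FFm m _ (A_Fm m h Fmh)).
have [Bf Bf0 HBf] := @bnd_cont R Lb _ Lb_compact cf.
have [Bh Bh0 HBh] := @bnd_cont R Lb _ Lb_compact ch.
pose a n := \sum_(lam : L n) M n lam * (A f (iota n lam) * h (iota n lam)).
pose a' n := \sum_(lam : L n) M n lam * (f (iota n lam) * A h (iota n lam)).
have cAfh : continuous (fun x => A f x * h x).
  by move=> x; apply: continuousM; [exact: cAf | exact: ch].
have cfAh : continuous (fun x => f x * A h x).
  by move=> x; apply: continuousM; [exact: cf | exact: cAh].
have Ha : (fun n => (a n)%:E) @ \oo --> (\int[P]_x (A f x * h x)%:E)%E := weak _ cAfh.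
have Ha' : (fun n => (a' n)%:E) @ \oo --> (\int[P]_x (f x * A h x)%:E)%E := weak _ cfAh.
have bc : forall n, (N <= n)%N ->
    \sum_(lam : L n) M n lam * (Gf n (iota n lam) * h (iota n lam)) =
    \sum_(lam : L n) M n lam * (f (iota n lam) * Gh n (iota n lam)).
  move=> n Nn.
  have [_ Ef] := HGf n Nn; have [_ Eh] := HGh n Nn.
  have Ef' : forall lam, Gf n (iota n lam) = (eps n)^-1 *
     (T_op L pd M n (pi_n L iota n f) lam - pi_n L iota n f lam).
    by move=> lam; exact: (congr1 (fun q => q lam) Ef).
  have Eh' : forall lam, Gh n (iota n lam) = (eps n)^-1 *
     (T_op L pd M n (pi_n L iota n h) lam - pi_n L iota n h lam).
    by move=> lam; exact: (congr1 (fun q => q lam) Eh).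
  transitivity ((eps n)^-1 * (\sum_lam M n lam * T_op L pd M n (pi_n L iota n f) lam * pi_n L iota n h lam
       - \sum_lam M n lam * pi_n L iota n f lam * pi_n L iota n h lam)).
    rewrite -sumrB mulr_sumr; apply: eq_bigr => lam _; rewrite Ef' /pi_n; ring.
  rewrite T_sym //.
  rewrite -sumrB mulr_sumr; apply: eq_bigr => lam _; rewrite Eh' /pi_n; ring.
pose d n := a' n - a n.
have Hd : d @ \oo --> (0 : R).
  apply/cvgrPdist_le => e e0.
  have e'0 : 0 < e / (Bf + Bh) by rewrite divr_gt0 // addr_gt0.
  have [N1 HN1] := cvGf _ e'0.
  have [N2 HN2] := cvGh _ e'0.
  exists (maxn N (maxn N1 N2)) => // n /= Hn.
  have Nn : (N <= n)%N by apply: leq_trans Hn; rewrite leq_maxl.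
  have N1n : (N1 <= n)%N.
    by apply: leq_trans Hn; apply: leq_trans (leq_maxr _ _); rewrite leq_maxl.
  have N2n : (N2 <= n)%N.
    by apply: leq_trans Hn; apply: leq_trans (leq_maxr _ _); rewrite leq_maxr.
  have E1 : a n - \sum_(lam : L n) M n lam * (Gf n (iota n lam) * h (iota n lam)) =
      \sum_(lam : L n) M n lam * ((A f (iota n lam) - Gf n (iota n lam)) * h (iota n lam)).
    by rewrite /a -sumrB; apply: eq_bigr => lam _; ring.
  have E2 : a' n - \sum_(lam : L n) M n lam * (f (iota n lam) * Gh n (iota n lam)) =
      \sum_(lam : L n) M n lam * ((A h (iota n lam) - Gh n (iota n lam)) * f (iota n lam)).
    by rewrite /a' -sumrB; apply: eq_bigr => lam _; ring.
  have B1 : `|a n - \sum_(lam : L n) M n lam * (Gf n (iota n lam) * h (iota n lam))| <= e / (Bf + Bh) * Bh.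
    rewrite E1; apply: (@sum_bnd R (L n) (M n) (fun lam => A f (iota n lam) - Gf n (iota n lam)) (fun lam => h (iota n lam))) => [lam||lam|lam]; [exact: M_ge0|exact: M_sum1|idtac|exact: HBh].
    by rewrite distrC; apply: ltW; apply: HN1.
  have B2 : `|a' n - \sum_(lam : L n) M n lam * (f (iota n lam) * Gh n (iota n lam))| <= e / (Bf + Bh) * Bf.
    rewrite E2; apply: (@sum_bnd R (L n) (M n) (fun lam => A h (iota n lam) - Gh n (iota n lam)) (fun lam => f (iota n lam))) => [lam||lam|lam]; [exact: M_ge0|exact: M_sum1|idtac|exact: HBf].
    by rewrite distrC; apply: ltW; apply: HN2.
  rewrite -(bc n Nn) in B2.
  rewrite sub0r normrN /d.
  set b := \sum_(lam : L n) _ in B1 B2.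
  have -> : a' n - a n = (a' n - b) - (a n - b) by ring.
  apply: (le_trans (ler_normB _ _)).
  have -> : e = e / (Bf + Bh) * Bf + e / (Bf + Bh) * Bh.
    rewrite -mulrDr mulfVK //; apply: lt0r_neq0; exact: addr_gt0.
  exact: lerD.
have HdE : (fun n => (d n)%:E) @ \oo --> (0%:E : \bar R).
  apply: cvg_EFin; first by apply: nearW => n.
  exact: Hd.
have Hs := cvgeD _ Ha HdE.
have Hsum : (fun n => ((a n)%:E + (d n)%:E)%E) @ \oo --> (\int[P]_x (A f x * h x)%:E + 0%:E)%E.
  by apply: Hs; apply: fin_num_adde_defl.
rewrite adde0 in Hsum.
have eqf : (fun n => ((a n)%:E + (d n)%:E)%E) = (fun n => (a' n)%:E).
  by apply: funext => n; rewrite -EFinD /d; congr (_%:E); ring.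
rewrite eqf in Hsum.
have e1 := cvg_lim (@ereal_hausdorff R) Hsum. have e2 := cvg_lim (@ereal_hausdorff R) Ha'. by rewrite -e1 -e2.
Qed.
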